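(* Index the six faces of a cube by a set $F$, and call two distinct faces adjacent if they share an edge (so each face is adjacent to exactly four faces, all except itself and the opposite face). Define the linear operator $A:\mathbb{R}^F\to\mathbb{R}^F$ by $(Ax)_f=\frac14\sum_{g \text{ adjacent to } f} x_g$. Then for every $x\in\mathbb{R}^F$, as $n\to\infty$, $A^n x$ converges to the vector all of whose entries equal $\frac16\sum_{g\in F}x_g$.
   Context: Interpretation: $x_f$ is the amount of kasha in the bowl on face $f$; each minute every dragon on a face takes one quarter of the kasha of each of its four neighboring faces, while all of its own kasha is taken, so one minute transforms $x$ into $Ax$. Amounts may be arbitrary real numbers. *)

(* Defs.v *)
From HB Require Import structures.
From mathcomp Require Import all_boot all_order all_algebra.
From mathcomp Require Import all_classical all_reals all_analysis.
Set Implicit Arguments. Unset Strict Implicit. Unset Printing Implicit Defensive.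
Import Order.TTheory GRing.Theory Num.Theory.
Local Open Scope ring_scope.

(* Faces of the cube [-1,1]^3: a face is determined by an axis (0,1,2) and a
   sign (the face x_axis = +1 or x_axis = -1). *)
Definition face : finType := ('I_3 * bool)%type.

(* Two distinct faces share an edge iff they are perpendicular to different
   axes; faces with the same axis are equal or opposite. *)
Definition adjacent (f g : face) : bool := f.1 != g.1.

Definition kashaA (R : realType) (x : face -> R) : face -> R :=
  fun f => 4^-1 * \sum_(g : face | adjacent f g) x g.

(* Main.v *)
Require Import Defs.
From HB Require Import structures.
From mathcomp Require Import all_boot all_order all_algebra.
From mathcomp Require Import all_classical all_reals all_analysis.
From mathcomp Require Import ring lra.
Import Order.TTheory GRing.Theory Num.Theory.
Import numFieldNormedType.Exports.
Local Open Scope classical_set_scope.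
Local Open Scope ring_scope.

Definition o0 : 'I_3 := @Ordinal 3 0 isT.
Definition o1 : 'I_3 := @Ordinal 3 1 isT.
Definition o2 : 'I_3 := @Ordinal 3 2 isT.

Lemma sum_face (R : realType) (F : face -> R) :
  \sum_(g : face) F g = F (o0,true) + F (o0,false) + F (o1,true) + F (o1,false)
    + F (o2,true) + F (o2,false).
Proof.
rewrite (eq_bigr (fun g : face => F (g.1, g.2))); last by case.
rewrite -(pair_big xpredT xpredT (fun (i : 'I_3) (b : bool) => F (i, b))) /=.
rewrite !big_ord_recl big_ord0 !big_bool /=.
have -> : lift ord0 ord0 = o1 :> 'I_3 by apply/val_inj.
have -> : lift ord0 (lift ord0 ord0) = o2 :> 'I_3 by apply/val_inj.
have -> : ord0 = o0 :> 'I_3 by apply/val_inj.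
ring.
Qed.

Lemma face_cases (P : face -> Prop) : P (o0,true) -> P (o0,false) -> P (o1,true) -> P (o1,false)
    -> P (o2,true) -> P (o2,false) -> forall f, P f.
Proof.
move=> ? ? ? ? ? ? [[[|[|[|n]]] Hn] [|]] //;
 by [ have -> : Ordinal Hn = o0 by apply/val_inj
    | have -> : Ordinal Hn = o1 by apply/val_inj
    | have -> : Ordinal Hn = o2 by apply/val_inj].
Qed.

Section S.
Variables (R : realType) (x : face -> R).
Let S := \sum_(g : face) x g.
Let d (a : 'I_3) := x (a,true) + x (a,false) - S / 3.

Lemma step (c : R) : kashaA (fun f => S/6 - c * d f.1 / 4) = (fun f => S/6 - (- c / 2) * d f.1 / 4).
Proof.
apply/funext; apply: face_cases; rewrite /kashaA big_mkcond sum_face /= /d /S sum_face /=.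
all: by field.
Qed.

Lemma closed n : iter n.+1 (@kashaA R) x = (fun f => S/6 - (- 2^-1) ^+ n * d f.1 / 4).
Proof.
elim: n => [|n IH].
  rewrite /=; apply/funext; apply: face_cases; rewrite /kashaA big_mkcond sum_face /= /d /S sum_face /=; by field.
rewrite iterS IH step; apply/funext => f; rewrite exprS; by field.
Qed.
End S.

Theorem mainTheorem1 (R : realType) (x : face -> R) :
  (fun n : nat => (iter n (@kashaA R) x : {ptws face -> R})) @ \oo -->
    ((fun _ : face => 6^-1 * \sum_(g : face) x g) : {ptws face -> R}).
Proof.
apply/(@pointwise_cvgP (discrete_topology face) R) => f.
rewrite -cvg_shiftS /=.
have -> : (fun n => iter n.+1 (@kashaA R) x f) =
  (fun n => (\sum_(g : face) x g)/6 - (- 2^-1) ^+ n * ((x (f.1,true) + x (f.1,false) - (\sum_(g : face) x g)/3) / 4)).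
  by apply/funext => n; rewrite closed mulrA.
have -> : 6^-1 * \sum_(g : face) x g = (\sum_(g : face) x g)/6 - 0 * ((x (f.1,true) + x (f.1,false) - (\sum_(g : face) x g)/3) / 4).
  by rewrite mul0r subr0 mulrC.
apply: cvgB; first exact: cvg_cst.
apply: cvgMl.
apply: cvg_expr.
rewrite normrN ger0_norm ?invr_ge0 // invf_lt1 //; lra.
Qed.
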